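(* For every ideal $I\subset\mathbb{C}[\mathrm{GL}_n]$, the matrix amoeba $\mathrm{s}\mathcal{A}(I)$ is closed in $\mathbb{R}^n/\mathcal{S}_n$.
   Context: $\mathbb{C}[\mathrm{GL}_n]$ is the ring of regular functions on $\mathrm{GL}_n(\mathbb{C})$. $\mathcal{S}_n$ acts on $\mathbb{R}^n$ by permuting coordinates; $\mathbb{R}^n/\mathcal{S}_n$ carries the metric $d(x,y) = \min_{\sigma\in\mathcal{S}_n}|\sigma\cdot x - y|$. $\mathrm{sLog}:\mathrm{GL}_n(\mathbb{C})\to\mathbb{R}^n/\mathcal{S}_n$ sends $A$ to $(\ln\lambda_1,\dots,\ln\lambda_n)$ where $\lambda_1,\dots,\lambda_n$ are the singular values of $A$. $\mathrm{s}\mathcal{A}(I) = \mathrm{sLog}(V(I))$ with $V(I) = \{A\in\mathrm{GL}_n(\mathbb{C}) : f(A) = 0\ \forall f\in I\}$. *)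

(* Defs.v *)
From HB Require Import structures.
From mathcomp Require Import all_boot all_order all_algebra all_fingroup.
From mathcomp Require Import complex.
From mathcomp Require Import all_classical all_reals all_analysis.
Set Implicit Arguments. Unset Strict Implicit. Unset Printing Implicit Defensive.
Import Order.TTheory GRing.Theory Num.Theory.
Local Open Scope ring_scope.

Section Defs.
Variable R : realType.
Variable n : nat.
Local Notation C := (R[i]).

Inductive poly_fun : ('M[C]_n -> C) -> Prop :=
  | pf_const (c : C) : poly_fun (fun _ => c)
  | pf_coord (i j : 'I_n) : poly_fun (fun A => A i j)
  | pf_add f g : poly_fun f -> poly_fun g -> poly_fun (fun A => f A + g A)
  | pf_mul f g : poly_fun f -> poly_fun g -> poly_fun (fun A => f A * g A).

(* Regular functions on GL_n(C): C[GL_n] = C[x_ij, det^-1]; f is regular iff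
   on GL_n it equals p / det^k for a polynomial p.  Only values on GL_n matter. *)
Definition regular (f : 'M[C]_n -> C) : Prop :=
  exists (p : 'M[C]_n -> C) (k : nat), poly_fun p /\
    forall A : 'M[C]_n, A \in unitmx -> f A = p A / (\det A) ^+ k.

Definition is_ideal (I : set ('M[C]_n -> C)) : Prop :=
  [/\ (forall f, I f -> regular f),
      I (fun _ => 0),
      (forall f g, I f -> I g -> I (fun A => f A + g A)) &
      (forall f g, regular g -> I f -> I (fun A => g A * f A))].

Definition zero_locus (I : set ('M[C]_n -> C)) : set 'M[C]_n :=
  [set A | A \in unitmx /\ forall f, I f -> f A = 0].

Definition adjoint (A : 'M[C]_n) : 'M[C]_n := (map_mx Num.conj A)^T.

(* s lists the singular values of A (with multiplicity, in some order):
   s_i >= 0 and the s_i^2 are the eigenvalues of A^* A (char. polynomial). *)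
Definition singular_values (A : 'M[C]_n) (s : 'rV[R]_n) : Prop :=
  (forall i, 0 <= s ord0 i) /\
  char_poly (adjoint A *m A) = \prod_(i < n) ('X - ((s ord0 i ^+ 2)%:C)%C%:P).

(* x is a representative in R^n of sLog(A) in R^n/S_n. *)
Definition sLog_rep (A : 'M[C]_n) (x : 'rV[R]_n) : Prop :=
  exists s, singular_values A s /\ forall i, x ord0 i = ln (s ord0 i).

(* Preimage in R^n of the matrix amoeba sA(I) = sLog(V(I)) (an S_n-invariant set). *)
Definition matrix_amoeba (I : set ('M[C]_n -> C)) : set 'rV[R]_n :=
  [set x | exists A, zero_locus I A /\ sLog_rep A x].

Definition perm_act (s : 'S_n) (x : 'rV[R]_n) : 'rV[R]_n := \row_i x ord0 (s i).

Definition eucl_norm (v : 'rV[R]_n) : R := Num.sqrt (\sum_(i < n) v ord0 i ^+ 2).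

Definition quot_dist (x y : 'rV[R]_n) : R :=
  \big[Num.min/eucl_norm (x - y)]_(s : 'S_n) eucl_norm (perm_act s x - y).

(* A subset of R^n/S_n, given by its (S_n-invariant) preimage S in R^n, is closed
   for the metric d: every point in its closure belongs to it. *)
Definition quot_closed (S : set 'rV[R]_n) : Prop :=
  forall x, (forall e : R, 0 < e -> exists y, S y /\ quot_dist x y < e) -> S x.

End Defs.

(* Main.v *)
Require Import Defs.
From HB Require Import structures.
From mathcomp Require Import all_boot all_order all_algebra all_fingroup.
From mathcomp Require Import complex.
From mathcomp Require Import all_classical all_reals all_analysis.
From mathcomp Require Import lra.
Import Order.TTheory GRing.Theory Num.Theory.
Local Open Scope ring_scope.
Import numFieldNormedType.Exports.

Section Part1.

Set Implicit Arguments. Unset Strict Implicit. Unset Printing Implicit Defensive.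
Local Open Scope ring_scope.
Local Open Scope classical_set_scope.

Section Cont.
Variable R : realType.
Variable I2 : eqType.

Local Notation P := (prod_topology (fun _ : I2 => R)).

Definition rc (h : P -> R) := continuous h.

Lemma rc_proj k : rc (fun t : P => t k).
Proof. exact: (@proj_continuous I2 (fun _ => R) k). Qed.

Lemma rc_cst c : rc (fun _ => c).
Proof. exact: cst_continuous. Qed.

Lemma rc_add f g : rc f -> rc g -> rc (fun t => f t + g t).
Proof. move=> hf hg x. exact: (@continuousD R R^o P f g x (hf x) (hg x)). Qed.
Lemma rc_mul f g : rc f -> rc g -> rc (fun t => f t * g t).
Proof. move=> hf hg x. have := (@continuousM R P f g x (hf x) (hg x)). by []. Qed.
Lemma rc_opp f : rc f -> rc (fun t => - f t).
Proof. move=> hf x. exact: (@continuousN R R^o P f x (hf x)). Qed.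
Lemma cluster_closed (G : set_system P) B (F : set P) :
  cluster G B -> closed F -> G F -> F B.
Proof.
move=> cl cF GF; rewrite (closure_id F).1 //.
move=> N NB; exact: cl.
Qed.

Lemma closed_rc_eq h c : rc h -> closed [set t | h t = c].
Proof. move=> hc; exact: ((continuous_closedP h).1 hc [set x : R | x = c] (@closed_eq R c)). Qed.
Lemma closed_rc_le h c : rc h -> closed [set t | h t <= c].
Proof. move=> hc; exact: ((continuous_closedP h).1 hc [set x : R | x <= c] (@closed_le R c)). Qed.
Lemma closed_rc_ge h c : rc h -> closed [set t | c <= h t].
Proof. move=> hc; exact: ((continuous_closedP h).1 hc [set x : R | c <= x] (@closed_ge R c)). Qed.

Local Open Scope complex_scope.
Definition cc (g : P -> R[i]) := rc (fun t => complex.Re (g t)) /\ rc (fun t => complex.Im (g t)).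

Lemma cc_cst c : cc (fun _ => c).
Proof. split; exact: rc_cst. Qed.

Lemma cc_add f g : cc f -> cc g -> cc (fun t => f t + g t).
Proof.
move=> [f1 f2] [g1 g2]; split.
- have -> : (fun t => complex.Re (f t + g t)) = (fun t => complex.Re (f t) + complex.Re (g t)).
    by apply: funext => t; case: (f t) => ? ?; case: (g t).
  exact: rc_add.
- have -> : (fun t => complex.Im (f t + g t)) = (fun t => complex.Im (f t) + complex.Im (g t)).
    by apply: funext => t; case: (f t) => ? ?; case: (g t).
  exact: rc_add.
Qed.

Lemma cc_opp f : cc f -> cc (fun t => - f t).
Proof.
move=> [f1 f2]; split.
- have -> : (fun t => complex.Re (- f t)) = (fun t => - complex.Re (f t)).
    by apply: funext => t; case: (f t).
  exact: rc_opp.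
- have -> : (fun t => complex.Im (- f t)) = (fun t => - complex.Im (f t)).
    by apply: funext => t; case: (f t).
  exact: rc_opp.
Qed.

Lemma cc_mul f g : cc f -> cc g -> cc (fun t => f t * g t).
Proof.
move=> [f1 f2] [g1 g2]; split.
- have -> : (fun t => complex.Re (f t * g t)) =
     (fun t => complex.Re (f t) * complex.Re (g t) + - (complex.Im (f t) * complex.Im (g t))).
    by apply: funext => t; case: (f t) => ? ?; case: (g t).
  by apply: rc_add; [exact: rc_mul|apply: rc_opp; exact: rc_mul].
- have -> : (fun t => complex.Im (f t * g t)) =
     (fun t => complex.Re (f t) * complex.Im (g t) + complex.Im (f t) * complex.Re (g t)).
    by apply: funext => t; case: (f t) => ? ?; case: (g t).
  by apply: rc_add; exact: rc_mul.
Qed.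

Lemma cc_conj f : cc f -> cc (fun t => Num.conj (f t)).
Proof.
move=> [f1 f2]; split.
- have -> : (fun t => complex.Re (Num.conj (f t))) = (fun t => complex.Re (f t)).
    by apply: funext => t; case: (f t).
  exact: f1.
- have -> : (fun t => complex.Im (Num.conj (f t))) = (fun t => - complex.Im (f t)).
    by apply: funext => t; case: (f t).
  exact: rc_opp.
Qed.

Lemma cc_real h : rc h -> cc (fun t => (h t)%:C).
Proof. by move=> hh; split => //=; exact: rc_cst. Qed.

Lemma cc_sum (J : Type) (r : seq J) (Q : pred J) (F : J -> P -> R[i]) :
  (forall j, cc (F j)) -> cc (fun t => \sum_(j <- r | Q j) F j t).
Proof.
move=> hF; elim: r => [|a r IH].
  under eq_fun do rewrite big_nil; exact: cc_cst.
under eq_fun do rewrite big_cons.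
case: (Q a) => //; exact: cc_add.
Qed.

Lemma cc_prod (J : Type) (r : seq J) (Q : pred J) (F : J -> P -> R[i]) :
  (forall j, cc (F j)) -> cc (fun t => \prod_(j <- r | Q j) F j t).
Proof.
move=> hF; elim: r => [|a r IH].
  under eq_fun do rewrite big_nil; exact: cc_cst.
under eq_fun do rewrite big_cons.
case: (Q a) => //; exact: cc_mul.
Qed.

Lemma cc_det m (M : P -> 'M[R[i]]_m) :
  (forall i j, cc (fun t => M t i j)) -> cc (fun t => \det (M t)).
Proof.
move=> hM; rewrite /determinant; apply: cc_sum => s.
apply: cc_mul; first exact: cc_cst.
by apply: cc_prod => i; exact: hM.
Qed.

Lemma cc_closed f g : cc f -> cc g -> closed [set t | f t = g t].
Proof.
move=> [f1 f2] [g1 g2].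
have -> : [set t | f t = g t] =
  [set t | complex.Re (f t) + - complex.Re (g t) = 0] `&` [set t | complex.Im (f t) + - complex.Im (g t) = 0].
  apply/seteqP; split => t /=.
    by move=> ->; rewrite !subrr.
  move=> [/eqP]; rewrite subr_eq0 => /eqP h1 /eqP; rewrite subr_eq0 => /eqP h2.
  by move: h1 h2; case: (f t) => ? ?; case: (g t) => ? ? /= -> ->.
apply: closedI; apply: closed_rc_eq; apply: rc_add => //; exact: rc_opp.
Qed.

End Cont.

End Part1.

Section Part2.
Set Implicit Arguments. Unset Strict Implicit. Unset Printing Implicit Defensive.
Local Open Scope ring_scope.
Local Open Scope classical_set_scope.

Section Mx.
Variable R : realType.
Variable n : nat.
Definition I2 : eqType := ((('I_n * 'I_n) * bool) + 'I_n)%type.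
Local Notation P := (prod_topology (fun _ : I2 => R)).
Local Open Scope complex_scope.

Definition matP (t : P) : 'M[R[i]]_n :=
  \matrix_(i, j) (t (inl (i, j, false)) +i* t (inl (i, j, true))).
Definition svP (t : P) : 'rV[R]_n := \row_i t (inr i).
Definition toP (A : 'M[R[i]]_n) (s : 'rV[R]_n) : P := fun k =>
  match k with
  | inl (i, j, b) => if b then complex.Im (A i j) else complex.Re (A i j)
  | inr i => s ord0 i end.

Lemma matP_toP A s : matP (toP A s) = A.
Proof. by apply/matrixP => i j; rewrite mxE /=; case: (A i j). Qed.
Lemma svP_toP A s : svP (toP A s) = s.
Proof. by apply/matrixP => i j; rewrite mxE /= (ord1 i). Qed.

Lemma cc_entry i j : cc (fun t : P => matP t i j).
Proof.
split.
  have -> : (fun t : P => complex.Re (matP t i j)) = (fun t : P => t (inl (i, j, false))).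
    by apply: funext => t; rewrite mxE.
  exact: rc_proj.
have -> : (fun t : P => complex.Im (matP t i j)) = (fun t : P => t (inl (i, j, true))).
  by apply: funext => t; rewrite mxE.
exact: rc_proj.
Qed.

Lemma char_poly_horner m (M : 'M[R[i]]_m) z : (char_poly M).[z] = \det (z%:M - M).
Proof.
rewrite /char_poly -[_.[z]]/(horner_eval z _) -det_map_mx.
congr (\det _); apply/matrixP => i j; rewrite !mxE /=.
rewrite /horner_eval hornerD hornerN hornerC hornerMn hornerX.
by case: (i == j).
Qed.

Lemma cc_adjmul : forall i j, cc (fun t : P => (adjoint (matP t) *m matP t) i j).
Proof.
move=> i j.
have -> : (fun t : P => (adjoint (matP t) *m matP t) i j) =
   (fun t : P => \sum_k Num.conj (matP t k i) * matP t k j).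
  by apply: funext => t; rewrite mxE; apply: eq_bigr => k _; rewrite !mxE.
apply: cc_sum => k; apply: cc_mul; last exact: cc_entry.
apply: cc_conj; exact: cc_entry.
Qed.

Lemma cc_charpoly z : cc (fun t : P => (char_poly (adjoint (matP t) *m matP t)).[z]).
Proof.
under eq_fun do rewrite char_poly_horner.
apply: cc_det => i j.
have -> : (fun t : P => (z%:M - adjoint (matP t) *m matP t) i j) =
   (fun t : P => z%:M i j - (adjoint (matP t) *m matP t) i j).
  by apply: funext => t; rewrite !mxE.
apply: cc_add; first exact: cc_cst.
apply: cc_opp; exact: cc_adjmul.
Qed.

Lemma cc_rhs z : cc (fun t : P => \prod_(i < n) (z - ((svP t ord0 i) ^+ 2)%:C)).
Proof.
apply: cc_prod => i; apply: cc_add; first exact: cc_cst.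
apply: cc_opp; apply: cc_real.
under eq_fun do rewrite mxE expr2.
by apply: rc_mul; exact: rc_proj.
Qed.

Lemma cc_poly_fun p : poly_fun p -> cc (fun t : P => p (matP t)).
Proof.
elim=> [c|i j|f g _ hf _ hg|f g _ hf _ hg].
- exact: cc_cst.
- exact: cc_entry.
- exact: cc_add.
- exact: cc_mul.
Qed.

End Mx.

End Part2.

Section Part3.
Set Implicit Arguments. Unset Strict Implicit. Unset Printing Implicit Defensive.
Local Open Scope ring_scope.

Section Alg.
Variable R : realType.
Local Open Scope complex_scope.

Lemma poly_eq_eval (p q : {poly R[i]}) : (forall z, p.[z] = q.[z]) -> p = q.
Proof.
move=> h; apply/eqP; rewrite -subr_eq0; apply/negPn/negP => nz.
pose rs := [seq (k%:R : R[i]) | k <- iota 0 (size (p - q))].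
have hA : all (root (p - q)) rs.
  by apply/allP => z _; rewrite /root !hornerE h subrr.
have hU : uniq rs.
  rewrite map_inj_uniq ?iota_uniq // => a b /eqP; rewrite eqr_nat => /eqP //.
have := max_poly_roots nz hA hU.
by rewrite size_map size_iota ltnn.
Qed.

Lemma Re_sum (J : Type) (r : seq J) (Q : pred J) (F : J -> R[i]) :
  complex.Re (\sum_(j <- r | Q j) F j) = \sum_(j <- r | Q j) complex.Re (F j).
Proof.
elim: r => [|a r IH]; first by rewrite !big_nil.
rewrite !big_cons; case: (Q a) => //.
by rewrite -IH; case: (F a) => ? ?; case: (\sum_(j <- r | Q j) F j).
Qed.

Lemma det_adjoint n (A : 'M[R[i]]_n) : \det (adjoint A) = Num.conj (\det A).
Proof. by rewrite /adjoint det_tr det_map_mx. Qed.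

Lemma charpoly0 n (A : 'M[R[i]]_n) :
  (char_poly (adjoint A *m A)).[0] = \det (- adjoint A) * \det A.
Proof.
rewrite char_poly_horner (_ : 0%:M = 0); last by apply/matrixP => i j; rewrite !mxE mul0rn.
by rewrite sub0r -mulNmx det_mulmx.
Qed.

Lemma sv_pos n (A : 'M[R[i]]_n) s : A \in unitmx -> singular_values A s ->
  forall i, 0 < s ord0 i.
Proof.
move=> uA [s0 hs] i; rewrite lt_def s0 andbT; apply/eqP => si0.
have dA : \det A != 0 by rewrite -unitfE -unitmxE.
have dN : \det (- adjoint A) != 0.
  rewrite -scaleN1r detZ mulf_neq0 ?expf_neq0 ?oppr_eq0 ?oner_eq0 //.
  by rewrite det_adjoint Num.Theory.conjC_eq0.
have : (char_poly (adjoint A *m A)).[0] != 0 by rewrite charpoly0 mulf_neq0.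
rewrite hs horner_prod (bigD1 i) //=.
have -> : ('X - ((s ord0 i ^+ 2)%:C)%:P).[0] = 0.
  by rewrite hornerXsubC si0 expr2 mul0r rmorph0 subrr.
by rewrite mul0r eqxx.
Qed.

Lemma sv_perm n (A : 'M[R[i]]_n) s (sg : 'S_n) : singular_values A s ->
  singular_values A (\row_i s ord0 (sg i)).
Proof.
move=> [s0 hs]; split => [i|]; first by rewrite mxE.
rewrite hs (reindex_inj (@perm_inj _ sg)) /=.
by apply: eq_bigr => i _; rewrite mxE.
Qed.

Lemma sv_trace n (A : 'M[R[i]]_n) s : (0 < n)%N -> singular_values A s ->
  \sum_i \sum_k (complex.Re (A k i) ^+ 2 + complex.Im (A k i) ^+ 2) =
  \sum_i s ord0 i ^+ 2.
Proof.
move=> n0 [_ hs].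
have htr : \tr (adjoint A *m A) = \sum_i ((s ord0 i) ^+ 2)%:C.
  apply: oppr_inj; rewrite -char_poly_trace // hs.
  rewrite -(big_map (fun i => ((s ord0 i) ^+ 2)%:C) xpredT (fun p => 'X - p%:P)).
  have sz : size [seq ((s ord0 i) ^+ 2)%:C | i <- index_enum 'I_n] = n.
    by rewrite size_map /index_enum; unlock; rewrite -enumT size_enum_ord.
  have hc := @coefPn_prod_XsubC _ [seq ((s ord0 i) ^+ 2)%:C | i <- index_enum 'I_n].
  rewrite sz in hc; rewrite hc; first by rewrite big_map.
  by rewrite -lt0n.
transitivity (complex.Re (\sum_i ((s ord0 i) ^+ 2)%:C)); last by rewrite Re_sum.
rewrite -htr /mxtrace Re_sum.
apply: eq_bigr => i _; rewrite !mxE Re_sum.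
apply: eq_bigr => k _; rewrite !mxE.
by case: (A k i) => a b /=; rewrite !expr2; lra.
Qed.

End Alg.

End Part3.

Section Part4.
Set Implicit Arguments. Unset Strict Implicit. Unset Printing Implicit Defensive.
Local Open Scope ring_scope.

Section Approx.
Variable R : realType.
Variable n : nat.

Lemma qd_lt (x y : 'rV[R]_n) e : quot_dist x y < e ->
  exists sg : 'S_n, eucl_norm (perm_act sg x - y) < e.
Proof.
move=> h; apply: contrapT => hn.
have hall : forall sg : 'S_n, e <= eucl_norm (perm_act sg x - y).
  move=> sg; rewrite leNgt; apply/negP => hs; apply: hn; by exists sg.
move: h; rewrite ltNge => /negP; apply.
rewrite /quot_dist; elim/big_ind: _ => //.
- have -> : x = perm_act 1 x by apply/matrixP => i j; rewrite mxE perm1 (ord1 i).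
  exact: hall.
- by move=> a b ha hb; rewrite le_min ha hb.
Qed.

Lemma coord_le_norm (v : 'rV[R]_n) i : `|v ord0 i| <= eucl_norm v.
Proof.
rewrite /eucl_norm -sqrtr_sqr ler_sqrt; last by apply: sumr_ge0 => j _; exact: sqr_ge0.
rewrite (bigD1 i) //= lerDl; apply: sumr_ge0 => j _; exact: sqr_ge0.
Qed.

Lemma approx (I : set ('M[R[i]]_n -> R[i])) (x : 'rV[R]_n) :
  (forall e : R, 0 < e -> exists y, matrix_amoeba I y /\ quot_dist x y < e) ->
  forall e : R, 0 < e -> exists A s, zero_locus I A /\ singular_values A s /\
    forall i, expR (x ord0 i - e) <= s ord0 i <= expR (x ord0 i + e).
Proof.
move=> H e e0.
have [y [[A [zA [s [svs hy]]]] hd]] := H e e0.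
have [sg hsg] := qd_lt hd.
exists A, (\row_i s ord0 ((sg^-1)%g i)); split => //; split; first exact: sv_perm.
move=> i; rewrite mxE.
set j := (sg^-1)%g i.
have sgj : sg j = i by rewrite /j permKV.
have hj := le_lt_trans (coord_le_norm _ j) hsg.
rewrite !mxE sgj hy in hj.
have spos : 0 < s ord0 j by apply: (sv_pos zA.1 svs).
have hls : expR (ln (s ord0 j)) = s ord0 j by rewrite lnK // posrE.
rewrite -hls !ler_expR.
move: hj; rewrite ltr_norml => /andP [h1 h2].
by apply/andP; split; lra.
Qed.

End Approx.

End Part4.

Local Open Scope complex_scope.

Theorem mainTheorem3 (R : realType) (n : nat) (I : set ('M[R[i]]_n -> R[i])) :
  is_ideal I -> quot_closed (matrix_amoeba I).
Proof.
move=> [Ireg _ _ _] x H.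
have ap := approx H.
pose P := prod_topology (fun _ : I2 n => R).
pose good (e : R) : set P := (fun t : P => zero_locus I (matP t) /\
   singular_values (matP t) (svP t) /\
   forall i, expR (x ord0 i - e) <= svP t ord0 i <= expR (x ord0 i + e)).
pose G := filter_from [set e : R | 0 < e] good.
have FG : Filter G.
  apply: filter_from_filter; first by exists 1; rewrite /= ltr01.
  move=> a b a0 b0; exists (Order.min a b); first by rewrite /= lt_min a0 b0.
  move=> t [zt [st ht]].
  have hb : forall c, Order.min a b <= c -> good c t.
    move=> c hc; split=> //; split=> // i; have /andP[h1 h2] := ht i.
    apply/andP; split; [apply: le_trans h1 | apply: le_trans h2 _];
      by rewrite ler_expR ?lerD2l ?lerN2.
  by split; apply: hb; rewrite ge_min lexx ?orbT.
have PG : ProperFilter G.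
  apply: filter_from_proper => e e0.
  have [A [s [zA [sA hA]]]] := ap e e0.
  by exists (toP A s); rewrite /good /= matP_toP svP_toP.
pose E i := expR (x ord0 i + 1).
pose Mb := 1 + \sum_i (E i ^+ 2 + E i).
have E0 : forall i, 0 < E i by move=> i; exact: expR_gt0.
have EM : forall i, E i <= Mb.
  move=> i; rewrite /Mb (bigD1 i) //=.
  have : 0 <= \sum_(j | j != i) (E j ^+ 2 + E j).
    apply: sumr_ge0 => j _; have := E0 j; nra.
  have := E0 i; nra.
have sumM : \sum_i E i ^+ 2 <= Mb - 1.
  rewrite /Mb [1 + _]addrC addrK; apply: ler_sum => i _; have := E0 i; nra.
have M1 : 1 <= Mb.
  by rewrite /Mb lerDl; apply: sumr_ge0 => i _; have := E0 i; nra.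
pose K : set P := fun t => forall k, `[-Mb, Mb]%classic (t k).
have cK : compact K.
  apply: (@tychonoff (I2 n) (fun _ => R) (fun _ => `[-Mb, Mb]%classic)) => _.
  exact: segment_compact.
have GK : G K.
  exists 1; first by rewrite /= ltr01.
  move=> t [zt [st ht]].
  have sb : forall i, 0 <= svP t ord0 i <= E i.
    move=> i; have /andP [h1 h2] := ht i; rewrite h2 andbT.
    by apply: le_trans h1; apply: ltW; exact: expR_gt0.
  have inM : forall c : R, c ^+ 2 <= Mb - 1 -> `[-Mb, Mb]%classic c.
    move=> c hc; rewrite /= in_itv /=.
    apply/andP; split; nra.
  case=> [[[i j] b]|i].
  - apply: inM; apply: le_trans sumM.
    have n0 : (0 < n)%N by apply: (leq_ltn_trans (leq0n i)).
    have hs : \sum_a (svP t ord0 a) ^+ 2 <= \sum_a E a ^+ 2.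
      apply: ler_sum => a _; have /andP [h1 h2] := sb a; have := E0 a; nra.
    apply: le_trans hs.
    rewrite -(sv_trace n0 st) (bigD1 j) //= (bigD1 i) //=.
    have : 0 <= \sum_(k | k != i) (complex.Re (matP t k j) ^+ 2 + complex.Im (matP t k j) ^+ 2).
      by apply: sumr_ge0 => k _; rewrite addr_ge0 // sqr_ge0.
    have : 0 <= \sum_(a | a != j) \sum_k (complex.Re (matP t k a) ^+ 2 + complex.Im (matP t k a) ^+ 2).
      by apply: sumr_ge0 => a _; apply: sumr_ge0 => k _; rewrite addr_ge0 // sqr_ge0.
    have := sqr_ge0 (complex.Re (matP t i j)); have := sqr_ge0 (complex.Im (matP t i j)).
    rewrite !mxE /=; case: b; lra.
  - have hh : svP t ord0 i = t (inr i) by rewrite mxE.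
    have := sb i; rewrite hh => /andP [h1 h2]; have := EM i => h3.
    have inI : forall c : R, -Mb <= c -> c <= Mb -> `[-Mb, Mb]%classic c.
      by move=> c c1 c2; rewrite /= in_itv /= c1 c2.
    apply: inI; lra.
have [B [KB clB]] := cK G PG GK.
have sB : forall i, svP B ord0 i = expR (x ord0 i).
  move=> i.
  have hle : forall e, 0 < e -> svP B ord0 i <= expR (x ord0 i + e).
    move=> e e0; rewrite mxE.
    apply: (cluster_closed (F := fun t : P => t (inr i) <= expR (x ord0 i + e)) clB).
      exact: (closed_rc_le (h := fun t : P => t (inr i)) (rc_proj (k := inr i))).
    exists e => // t [_ [_ ht]]; have /andP [_ h2] := ht i; move: h2; rewrite mxE //.
  have hge : forall e, 0 < e -> expR (x ord0 i - e) <= svP B ord0 i.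
    move=> e e0; rewrite mxE.
    apply: (cluster_closed (F := fun t : P => expR (x ord0 i - e) <= t (inr i)) clB).
      exact: (closed_rc_ge (h := fun t : P => t (inr i)) (rc_proj (k := inr i))).
    exists e => // t [_ [_ ht]]; have /andP [h1 _] := ht i; move: h1; rewrite mxE //.
  have spos : 0 < svP B ord0 i by apply: lt_le_trans (hge 1 ltr01); exact: expR_gt0.
  have hls : expR (ln (svP B ord0 i)) = svP B ord0 i by rewrite lnK // posrE.
  suff hl : ln (svP B ord0 i) = x ord0 i by rewrite -hls hl.
  apply/le_anti/andP; split.
    apply/ler_addgt0Pr => e e0; rewrite -ler_expR hls; exact: hle.
  apply/ler_addgt0Pr => e e0; rewrite -lerBlDr -ler_expR hls; exact: hge.
pose A := matP B.
have hev : forall z, (char_poly (adjoint A *m A)).[z] =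
    \prod_(i < n) (z - ((svP B ord0 i) ^+ 2)%:C).
  move=> z.
  apply: (cluster_closed (F := fun t : P => (char_poly (adjoint (matP t) *m matP t)).[z] =
    \prod_(i < n) (z - ((svP t ord0 i) ^+ 2)%:C)) clB).
    exact: (cc_closed (cc_charpoly n z) (cc_rhs n z)).
  exists 1; first by rewrite /= ltr01.
  move=> t [_ [[_ hs] _]].
  by rewrite /= hs horner_prod; apply: eq_bigr => i _; rewrite hornerXsubC.
have hcp : char_poly (adjoint A *m A) =
    \prod_(i < n) ('X - (((svP B ord0 i) ^+ 2)%:C)%:P).
  apply: poly_eq_eval => z; rewrite hev horner_prod.
  by apply: eq_bigr => i _; rewrite hornerXsubC.
have dA : \det A != 0.
  have h0 := hev 0; rewrite charpoly0 in h0.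
  have : \prod_(i < n) (0 - ((svP B ord0 i) ^+ 2)%:C) != 0.
    apply/prodf_neq0 => i _; rewrite sub0r oppr_eq0 fmorph_eq0 sB expf_eq0 /=.
    by rewrite gt_eqF // expR_gt0.
  by rewrite -h0; apply: contraNneq => ->; rewrite mulr0.
have uA : A \in unitmx by rewrite unitmxE unitfE.
have zA : zero_locus I A.
  split => // f If.
  have [p [k [hp hfe]]] := Ireg f If.
  have pz : p A = 0.
    apply: (cluster_closed (F := fun t : P => p (matP t) = (fun _ : P => 0) t) clB).
      exact: (cc_closed (cc_poly_fun (n:=n) hp) (@cc_cst R (I2 n) 0)).
    exists 1; first by rewrite /= ltr01.
    move=> t [[ut zt] _] /=.
    have := hfe _ ut; rewrite zt // => /esym /eqP.
    have dt : \det (matP t) != 0 by rewrite -unitfE -unitmxE.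
    by rewrite mulf_eq0 invr_eq0 expf_eq0 (negbTE dt) andbF orbF => /eqP.
  by rewrite hfe // pz mul0r.
exists A; split => //.
exists (svP B); split.
  split => [i|]; last exact: hcp.
  by rewrite sB; apply: ltW; exact: expR_gt0.
by move=> i; rewrite sB expRK.
Qed.
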